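(* Let $\mathcal{E}$ be a metric space, $\lambda,\kappa,\mu\colon\mathcal{E}\to[0,\infty)$ continuous, $t\ge0$, and let $\{J_n\}_{n\in\mathbb{N}}$ be $\mathcal{E}$-valued càdlàg processes such that the laws $\nu_n$ of $\phi_t(J_n)$ on $\mathbb{R}$ satisfy a large deviations principle with rate function $\psi$. Then the set $\mathcal{R}(t)$ of attainable parameters at time $t$ is a non-empty closed subset of $[0,\infty)$ and $\{\gamma:\psi(\gamma)<\infty\}\subset\mathcal{R}(t)$.
   Context: $\phi_t(f)=\int_0^t\lambda(f(s))\exp(-\kappa(f(s))\int_s^t\mu(f(r))\,dr)\,ds$ for càdlàg $f\colon[0,\infty)\to\mathcal{E}$. A sequence of probability measures $\nu_n$ satisfies an LDP with rate function $\psi$ if $\psi\colon\mathbb{R}\to[0,\infty]$ is lower semicontinuous, $\limsup\frac1n\log\nu_n(F)\le-\inf_F\psi$ for closed $F$ and $\liminf\frac1n\log\nu_n(G)\ge-\inf_G\psi$ for open $G$. A number $\gamma\in[0,\infty)$ is an attainable parameter at time $t$ if for every $\epsilon>0$ there exists $N_\epsilon$ such that $\nu_n((\gamma-\epsilon,\gamma+\epsilon))>0$ for all $n\ge N_\epsilon$; $\mathcal{R}(t)$ denotes the set of such $\gamma$. *)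

(* Defs.v *)
From HB Require Import structures.
From mathcomp Require Import all_boot all_order all_algebra.
From mathcomp Require Import all_classical all_reals all_analysis.
Set Implicit Arguments. Unset Strict Implicit. Unset Printing Implicit Defensive.
Import Order.TTheory GRing.Theory Num.Theory.
Import numFieldNormedType.Exports.
Local Open Scope classical_set_scope.
Local Open Scope ring_scope.

Definition cadlag (R : realType) (E : topologicalType) (f : R -> E) : Prop :=
  (forall s : R, 0 <= s -> f x @[x --> s^'+] --> f s) /\
  (forall s : R, 0 < s -> exists l : E, f x @[x --> s^'-] --> l).

Definition phi (R : realType) (E : Type) (lam kap mu : E -> R) (t : R)
    (f : R -> E) : R :=
  Rintegral lebesgue_measure `[0, t]
    (fun s => lam (f s) *
       expR (- (kap (f s) * Rintegral lebesgue_measure `[s, t] (fun r => mu (f r))))).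

Definition LDP (R : realType) (nu : nat -> set R -> \bar R) (psi : R -> \bar R)
  : Prop :=
  (forall x, (0 <= psi x)%E) /\
  lower_semicontinuous psi /\
  (forall F : set R, closed F ->
     (limn_esup (fun n => (n%:R^-1)%:E * lne (nu n F)) <= - ereal_inf (psi @` F))%E) /\
  (forall G : set R, open G ->
     (- ereal_inf (psi @` G) <= limn_einf (fun n => (n%:R^-1)%:E * lne (nu n G)))%E).

Definition attainable (R : realType) (nu : nat -> set R -> \bar R) : set R :=
  [set gam : R | 0 <= gam /\
     forall eps : R, 0 < eps -> exists N : nat, forall n : nat, (N <= n)%N ->
       (0%E < nu n [set x : R | (gam - eps < x < gam + eps)%R])%E].

(* Main.v *)
Require Import Defs.
From HB Require Import structures.
From mathcomp Require Import all_boot all_order all_algebra.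
From mathcomp Require Import all_classical all_reals all_analysis.
From mathcomp Require Import lra.
Import Order.TTheory GRing.Theory Num.Theory.
Import numFieldNormedType.Exports.
Local Open Scope classical_set_scope.
Local Open Scope ring_scope.

Lemma einf_Ny (R : realType) (f : nat -> \bar R) :
  (forall N, exists n, (N <= n)%N /\ f n = 0%E) ->
  limn_einf (fun n => (n%:R^-1)%:E * lne (f n))%E = -oo%E.
Proof.
move=> H; rewrite limn_einf_lim.
set u := (fun n => _).
have -> : einfs u = fun=> -oo%E.
  apply/funext => N /=.
  have [n [Nn fn]] := H N.+1.
  apply/eqP; rewrite -leeNy_eq.
  apply: (@le_trans _ _ (u n)); first by apply: ereal_inf_lbound; exists n => //=; exact: ltnW.
  rewrite /u fn le0_lneNy // gt0_muleNy // lte_fin invr_gt0 ltr0n.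
  by apply: leq_ltn_trans Nn.
by rewrite lim_cst.
Qed.

Lemma phi_ge0 (R : realType) (E : Type) (lam kap mu : E -> R) t f :
  (forall x, 0 <= lam x) -> 0 <= phi lam kap mu t f.
Proof.
move=> h; apply: Rintegral_ge0 => x _; exact: mulr_ge0.
Qed.
Theorem lemma1 (R : realType) (E : metricType R)
  (lam kap mu : E -> R)
  (lam_cont : continuous lam) (kap_cont : continuous kap) (mu_cont : continuous mu)
  (lam_ge0 : forall x, 0 <= lam x) (kap_ge0 : forall x, 0 <= kap x)
  (mu_ge0 : forall x, 0 <= mu x)
  (t : R) (t_ge0 : 0 <= t)
  (d : measure_display) (Omega : measurableType d) (P : probability Omega R)
  (J : nat -> Omega -> R -> E)
  (J_cadlag : forall n w, cadlag (J n w))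
  (phiJ_meas : forall n, measurable_fun setT (fun w => phi lam kap mu t (J n w)))
  (psi : R -> \bar R)
  (hLDP : LDP (fun n A => P ((fun w => phi lam kap mu t (J n w)) @^-1` A)) psi) :
  let Rt := attainable (fun n A => P ((fun w => phi lam kap mu t (J n w)) @^-1` A)) in
  Rt !=set0 /\ closed Rt /\ Rt `<=` `[0, +oo[ /\
  [set gam | (psi gam < +oo)%E] `<=` Rt.
Proof.
move=> Rt.
have X0 : forall n w, 0 <= phi lam kap mu t (J n w) by move=> *; exact: phi_ge0.
have mX : forall n A, measurable A ->
    measurable ((fun w => phi lam kap mu t (J n w)) @^-1` A).
  by move=> n A mA; rewrite -[X in measurable X]setTI; exact: phiJ_meas.
have mI : forall a b : R, measurable [set x : R | a < x < b].
  move=> a b; have -> : [set x : R | a < x < b] = `]a, b[%classic.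
    by apply/seteqP; split=> x /=; rewrite in_itv.
  exact: measurable_itv.
move: hLDP => [psi0 [_ [hup hlow]]].
have fin_in : forall gam, (psi gam < +oo)%E -> Rt gam.
  move=> gam pg.
  have lowG : forall G, open G -> G gam ->
      (forall N, exists n, (N <= n)%N /\
         P ((fun w => phi lam kap mu t (J n w)) @^-1` G) = 0%E) -> False.
    move=> G oG Gg H.
    have h1 : (ereal_inf (psi @` G) < +oo)%E.
      by apply: le_lt_trans pg; apply: ereal_inf_lbound; exists gam.
    have := hlow G oG; rewrite /= einf_Ny // leeNy_eq eqe_oppLR /= => /eqP h.
    by rewrite h in h1.
  split.
    rewrite leNgt; apply/negP => g0.
    apply: (lowG [set x | x < 0]) => //.
    move=> N; exists N; split => //.
    have -> : (fun w => phi lam kap mu t (J N w)) @^-1` [set x | x < 0] = set0.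
      by apply/seteqP; split=> w //=; rewrite ltNge X0.
    exact: measure0.
  move=> eps e0; apply: contrapT => H.
  apply: (lowG [set x | gam - eps < x < gam + eps]).
  - have -> : [set x : R | gam - eps < x < gam + eps] =
              [set x | x \in `]gam - eps, gam + eps[].
      by apply/seteqP; split=> x /=; rewrite in_itv.
    exact: interval_open.
  - by rewrite /=; apply/andP; split; lra.
  - move=> N; apply: contrapT => H2; apply: H; exists N => n Nn.
    rewrite lt0e measure_ge0 andbT; apply/eqP => h; apply: H2; exists n; split => //.
split.
  have h := hup setT closedT.
  have e : (fun n => (n%:R^-1)%:E *
      lne (P ((fun w => phi lam kap mu t (J n w)) @^-1` setT)))%E = fun=> 0%E.
    by apply/funext => n; rewrite preimage_setT probability_setT lne1 mule0.
  rewrite /= e in h.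
  have hs : limn_esup (fun=> 0%E : \bar R) = 0%E.
    rewrite limn_esup_lim.
    have -> : esups (fun=> 0%E : \bar R) = fun=> 0%E.
      apply/funext=> n; rewrite /esups /=; apply/eqP; rewrite eq_le; apply/andP; split.
        by apply: ge_ereal_sup => _ [k _ <-].
      apply: le_ereal_sup_tmp; exists 0%E => //; rewrite /sdrop /=; by exists n.
    exact: lim_cst.
  rewrite hs leeNr oppe0 in h.
  have : (ereal_inf (psi @` setT) < 1)%E by apply: le_lt_trans h _.
  move=> /ereal_inf_lt [_ [gam _ <-] pg].
  exists gam; apply: fin_in; exact: lt_trans pg (ltry _).
split.
  move=> x clx; split.
    rewrite leNgt; apply/negP => x0.
    have nb : nbhs x (ball x (- x)) by apply: nbhsx_ballx; lra.
    have [y [[y0 _] bxy]] := clx _ nb.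
    move: bxy; rewrite -ball_normE /ball_ /= => /ltr_normlP [h1 h2]; lra.
  move=> eps e0.
  have nb : nbhs x (ball x (eps / 2)) by apply: nbhsx_ballx; lra.
  have [y [[_ Hy] bxy]] := clx _ nb.
  move: bxy; rewrite -ball_normE /ball_ /= => /ltr_normlP [h1 h2].
  have e2 : 0 < eps / 2 by lra.
  have [N HN] := Hy (eps / 2) e2.
  exists N => n Nn; apply: lt_le_trans (HN n Nn) _.
  apply: le_measure; rewrite ?inE; try exact: mX.
  move=> w /= /andP [h3 h4]; apply/andP; split; lra.
split.
  by move=> x [x0 _]; rewrite /= in_itv /= andbT.
exact: fin_in.
Qed.
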